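(* Let $A$ be a nonempty countable alphabet and $X\subseteq A^{\mathbb{N}}$ a shift space. The following are equivalent: (i) $X$ is a shift of finite order; (ii) $(X,d_\Pi,\sigma)$ has the shadowing property; (iii) $(X,d_\Pi,\sigma)$ has the finite shadowing property.
   Context: $A$ carries the discrete topology; $A^{\mathbb{N}}$ carries the product topology and the metric $d_\Pi(x,y)=1/(i+1)$ where $i$ is the least index with $x_i\ne y_i$ ($d_\Pi(x,x)=0$). The shift map is $\sigma((x_i)_i)=(x_{i+1})_i$. A shift space is a closed $X\subseteq A^{\mathbb{N}}$ with $\sigma(X)\subseteq X$. For a set $F$ of finite words over $A$, $X_F$ is the set of sequences in $A^{\mathbb{N}}$ containing no word of $F$ as a block of consecutive entries. $X$ has order $p$ ($p\in\mathbb{N}$) if $X=X_F$ for some set $F$ of words all of length $p$; $X$ is of finite order if it has order $p$ for some $p$. For a map $f$ on a metric space, a $\delta$-pseudo-orbit is a (finite or infinite) sequence $(x_n)$ with $d(f(x_n),x_{n+1})<\delta$ for consecutive indices; $x$ $\varepsilon$-shadows it if $d(f^n(x),x_n)<\varepsilon$ for all indices. Finite shadowing property: for every $\varepsilon>0$ there is $\delta>0$ such that every finite $\delta$-pseudo-orbit is $\varepsilon$-shadowed by some point; shadowing property: the same for infinite pseudo-orbits. *)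

(* Defs.v *)
From Stdlib Require Import Reals List Classical ClassicalEpsilon.
Open Scope R_scope.

Section Shift.
Variable A : Type.

Definition seqA := nat -> A.

Definition shift (x : seqA) : seqA := fun i => x (S i).

Definition shift_iter (n : nat) (x : seqA) : seqA := Nat.iter n shift x.

Definition dPi (x y : seqA) : R :=
  match excluded_middle_informative (x = y) with
  | left _ => 0
  | right _ =>
      / INR (S (epsilon (inhabits 0%nat)
                  (fun i => x i <> y i /\ forall j, (j < i)%nat -> x j = y j)))
  end.

(* closed in the product topology (A discrete): a point all of whose basic
   cylinder neighbourhoods meet X lies in X *)
Definition closed_prod (X : seqA -> Prop) : Prop :=
  forall x, (forall n : nat, exists y, X y /\ forall i, (i < n)%nat -> y i = x i) -> X x.

Definition shift_space (X : seqA -> Prop) : Prop :=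
  closed_prod X /\ forall x, X x -> X (shift x).

Definition occurs (w : list A) (x : seqA) : Prop :=
  exists k : nat, forall i, (i < length w)%nat -> nth_error w i = Some (x (k + i)%nat).

Definition X_F (F : list A -> Prop) (x : seqA) : Prop :=
  forall w, F w -> ~ occurs w x.

Definition has_order (X : seqA -> Prop) (p : nat) : Prop :=
  exists F : list A -> Prop,
    (forall w, F w -> length w = p) /\ (forall x, X x <-> X_F F x).

Definition finite_order (X : seqA -> Prop) : Prop :=
  exists p : nat, has_order X p.

Definition finite_shadowing (X : seqA -> Prop) : Prop :=
  forall eps : R, eps > 0 -> exists delta : R, delta > 0 /\
    forall (n : nat) (xs : nat -> seqA),
      (forall k, (k <= n)%nat -> X (xs k)) ->
      (forall k, (k < n)%nat -> dPi (shift (xs k)) (xs (S k)) < delta) ->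
      exists x, X x /\ forall k, (k <= n)%nat -> dPi (shift_iter k x) (xs k) < eps.

Definition shadowing (X : seqA -> Prop) : Prop :=
  forall eps : R, eps > 0 -> exists delta : R, delta > 0 /\
    forall xs : nat -> seqA,
      (forall k, X (xs k)) ->
      (forall k, dPi (shift (xs k)) (xs (S k)) < delta) ->
      exists x, X x /\ forall k, dPi (shift_iter k x) (xs k) < eps.

End Shift.

(* Main.v *)
Require Import Defs.
From Stdlib Require Import Reals List Classical ClassicalEpsilon.
From Stdlib Require Import Lia Lra FunctionalExtensionality Arith.

Section Aux.
Variable A : Type.

Lemma first_diff (x y : seqA A) : x <> y ->
  exists i, x i <> y i /\ forall j, (j < i)%nat -> x j = y j.
Proof.
  intro Hne.
  assert (Hk : exists k, x k <> y k).
  { apply NNPP; intro H. apply Hne. apply functional_extensionality.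
    intro k. apply NNPP. intro H'. apply H. exists k. exact H'. }
  destruct Hk as [k Hk].
  induction k as [k IH] using (well_founded_induction Wf_nat.lt_wf).
  destruct (classic (forall j, (j < k)%nat -> x j = y j)) as [Hall|Hnall].
  - exists k. split; assumption.
  - apply not_all_ex_not in Hnall. destruct Hnall as [j Hj].
    apply imply_to_and in Hj. destruct Hj as [Hjk Hj].
    exact (IH j Hjk Hj).
Qed.

Lemma dPi_spec (x y : seqA A) : x <> y ->
  exists i, x i <> y i /\ (forall j, (j < i)%nat -> x j = y j) /\
    dPi A x y = / INR (S i).
Proof.
  intro Hne. unfold dPi.
  destruct (excluded_middle_informative (x = y)) as [e|_]; [contradiction|].
  set (P := fun i => x i <> y i /\ forall j, (j < i)%nat -> x j = y j).
  assert (HP : P (epsilon (inhabits 0%nat) P)).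
  { apply epsilon_spec. apply first_diff. exact Hne. }
  destruct HP as [H1 H2].
  exists (epsilon (inhabits 0%nat) P). split; [|split]; auto.
Qed.

Lemma dPi_lt (x y : seqA A) (m : nat) :
  (forall j, (j <= m)%nat -> x j = y j) -> dPi A x y < / INR (S m).
Proof.
  intro H.
  destruct (classic (x = y)) as [e|ne].
  - subst. unfold dPi. destruct (excluded_middle_informative (y = y)); [|congruence].
    apply Rinv_0_lt_compat. apply lt_0_INR. lia.
  - destruct (dPi_spec x y ne) as [i [Hi [_ Hd]]]. rewrite Hd.
    assert (m < i)%nat.
    { destruct (Nat.le_gt_cases i m) as [Hle|Hgt]; [|exact Hgt].
      exfalso. apply Hi. apply H. exact Hle. }
    apply Rinv_lt_contravar.
    + apply Rmult_lt_0_compat; apply lt_0_INR; lia.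
    + apply lt_INR. lia.
Qed.

Lemma dPi_lt_inv (x y : seqA A) (m : nat) :
  dPi A x y < / INR (S m) -> forall j, (j <= m)%nat -> x j = y j.
Proof.
  intros H j Hj.
  destruct (classic (x = y)) as [e|ne]; [subst; reflexivity|].
  destruct (dPi_spec x y ne) as [i [Hi [Hlt Hd]]]. rewrite Hd in H.
  destruct (Nat.le_gt_cases i m) as [Hle|Hgt].
  - exfalso. assert (/ INR (S m) <= / INR (S i)).
    { apply Rinv_le_contravar. apply lt_0_INR; lia. apply le_INR; lia. }
    lra.
  - apply Hlt. lia.
Qed.

Lemma dPi_refl (x : seqA A) : dPi A x x = 0.
Proof. unfold dPi. destruct (excluded_middle_informative (x = x)); congruence. Qed.

Lemma shift_iter_app k (x : seqA A) j : shift_iter A k x j = x (k + j)%nat.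
Proof.
  revert x j. induction k as [|k IH]; intros x j; [reflexivity|].
  change (shift_iter A (S k) x) with (shift A (shift_iter A k x)).
  unfold shift. rewrite IH. f_equal. lia.
Qed.

Lemma shift_iter_X (X : seqA A -> Prop) : shift_space A X ->
  forall k x, X x -> X (shift_iter A k x).
Proof.
  intros [_ Hs] k. induction k as [|k IH]; intros x Hx; [exact Hx|].
  change (shift_iter A (S k) x) with (shift A (shift_iter A k x)).
  apply Hs, IH, Hx.
Qed.

Lemma small_inv (eps : R) : eps > 0 -> exists N, / INR (S N) < eps.
Proof.
  intro He. destruct (archimed_cor1 eps He) as [N [HN HN0]].
  exists N. eapply Rlt_trans; [|exact HN].
  apply Rinv_lt_contravar.
  - apply Rmult_lt_0_compat; apply lt_0_INR; lia.
  - apply lt_INR. lia.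
Qed.

End Aux.

Theorem proposition2p19 (A : Type)
  (Hcount : exists f : A -> nat, forall a b, f a = f b -> a = b)
  (Hne : inhabited A)
  (X : seqA A -> Prop) (HX : shift_space A X) :
  (finite_order A X <-> shadowing A X) /\ (shadowing A X <-> finite_shadowing A X).
Proof.
  assert (I12 : finite_order A X -> shadowing A X).
  { intros [p [F [HFl HXF]]] eps Heps.
    destruct (small_inv eps Heps) as [N HN].
    exists (/ INR (S (N + p))). split.
    { apply Rinv_0_lt_compat. apply lt_0_INR. lia. }
    intros xs HXs Hps.
    assert (Hrel : forall k j, (j <= N + p)%nat -> xs k (S j) = xs (S k) j).
    { intros k j Hj. exact (dPi_lt_inv A _ _ _ (Hps k) j Hj). }
    assert (Hind : forall i k, (i <= N + p)%nat -> xs (k + i)%nat 0%nat = xs k i).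
    { induction i as [|i IH]; intros k Hi.
      - rewrite Nat.add_0_r. reflexivity.
      - replace (k + S i)%nat with (S k + i)%nat by lia.
        rewrite IH by lia. symmetry. apply Hrel. lia. }
    exists (fun k => xs k 0%nat). split.
    - apply HXF. intros w Hw [k Hk].
      apply (proj1 (HXF (xs k)) (HXs k) w Hw).
      exists 0%nat. intros i Hi. rewrite Hk by exact Hi. simpl.
      rewrite Hind; [reflexivity|]. rewrite (HFl w Hw) in Hi. lia.
    - intros k. eapply Rlt_trans; [|exact HN].
      apply dPi_lt. intros j Hj. rewrite shift_iter_app. apply Hind. lia. }
  assert (I23 : shadowing A X -> finite_shadowing A X).
  { intros Hsh eps Heps. destruct (Hsh eps Heps) as [delta [Hd Hdel]].
    exists delta. split; [exact Hd|]. intros n xs HXs Hps.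
    set (ys := fun k => match le_lt_dec k n with
                        | left _ => xs k
                        | right _ => shift_iter A (k - n) (xs n) end).
    assert (Hys : forall k, (k <= n)%nat -> ys k = xs k).
    { intros k Hk. unfold ys. destruct (le_lt_dec k n); [reflexivity|lia]. }
    destruct (Hdel ys) as [x [Hx Hsx]].
    - intro k. unfold ys. destruct (le_lt_dec k n).
      + apply HXs; lia.
      + apply shift_iter_X; [exact HX|]. apply HXs; lia.
    - intro k. destruct (le_lt_dec (S k) n) as [Hl|Hl].
      + rewrite !Hys by lia. apply Hps. lia.
      + assert (E : shift A (ys k) = ys (S k)).
        { unfold ys. destruct (le_lt_dec (S k) n); [lia|].
          destruct (le_lt_dec k n).
          - assert (k = n) by lia. subst. replace (S n - n)%nat with 1%nat by lia.
            reflexivity.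
          - replace (S k - n)%nat with (S (k - n)) by lia. reflexivity. }
        rewrite E, dPi_refl. exact Hd.
    - exists x. split; [exact Hx|]. intros k Hk. rewrite <- Hys by exact Hk. apply Hsx. }
  assert (I31 : finite_shadowing A X -> finite_order A X).
  { intros Hfs. destruct (Hfs 1 Rlt_0_1) as [delta [Hd Hdel]].
    destruct (archimed_cor1 delta Hd) as [p [Hp Hp0]].
    exists (S p). exists (fun w => length w = S p /\ ~ (exists y, X y /\ occurs A w y)).
    split; [intros w [Hw _]; exact Hw|].
    intro x. split.
    - intros Hx w [_ Hw] Hocc. apply Hw. exists x. split; assumption.
    - intros HxF.
      assert (Hz : forall k, exists z, X z /\ forall i, (i < S p)%nat -> z i = x (k + i)%nat).
      { intro k.
        set (w := map x (seq k (S p))).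
        assert (Hwn : forall i, (i < S p)%nat -> nth_error w i = Some (x (k + i)%nat)).
        { intros i Hi. unfold w. rewrite nth_error_map, nth_error_seq.
          destruct (Nat.ltb_spec i (S p)); [reflexivity|lia]. }
        assert (Hocc : occurs A w x).
        { exists k. intros i Hi. unfold w in Hi. rewrite length_map, length_seq in Hi.
          apply Hwn. exact Hi. }
        destruct (classic (exists y, X y /\ occurs A w y)) as [[y [Hy [m Hm]]]|Hn].
        - exists (shift_iter A m y). split.
          + apply shift_iter_X; assumption.
          + intros i Hi. rewrite shift_iter_app.
            assert (Hl : (i < length w)%nat) by (unfold w; rewrite length_map, length_seq; exact Hi).
            specialize (Hm i Hl). rewrite Hwn in Hm by exact Hi. congruence.
        - exfalso. apply (HxF w); [|exact Hocc]. split; [|exact Hn].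
          unfold w. rewrite length_map, length_seq. reflexivity. }
      set (zs := fun k => proj1_sig (constructive_indefinite_description _ (Hz k))).
      assert (Hzs : forall k, X (zs k) /\ forall i, (i < S p)%nat -> zs k i = x (k + i)%nat).
      { intro k. unfold zs. destruct (constructive_indefinite_description _ (Hz k)). simpl.
        exact a. }
      destruct HX as [Hcl _]. apply Hcl. intro n.
      destruct (Hdel n zs) as [w [Hw Hsw]].
      + intros k _. apply Hzs.
      + intros k _. eapply Rlt_trans; [|exact Hp].
        replace (INR p) with (INR (S (p - 1))) by (f_equal; lia).
        apply dPi_lt. intros j Hj. unfold shift.
        rewrite (proj2 (Hzs k)) by lia. rewrite (proj2 (Hzs (S k))) by lia.
        f_equal. lia.
      + exists w. split; [exact Hw|]. intros i Hi.
        assert (H1 : dPi A (shift_iter A i w) (zs i) < / INR (S 0)).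
        { simpl. rewrite Rinv_1. apply Hsw. lia. }
        pose proof (dPi_lt_inv A _ _ 0 H1 0 (le_n 0)) as H2.
        rewrite shift_iter_app, (proj2 (Hzs i)) in H2 by lia.
        rewrite !Nat.add_0_r in H2. exact H2. }
  split; split; auto.
Qed.
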